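(* Let $\sigma\in(0,0.25]$, $\pi_0\in(0,1)$, $w>0$ and $\pi^*\in(0,1)$, and let $\psi(\pi)=w$ if $\pi\ge\pi^*$ and $\psi(\pi)=0$ otherwise. Define $\pi_1(1)=\frac{(1+4\sigma)\pi_0}{1+4\sigma\pi_0}$, $\pi_1(0)=\frac{(1-4\sigma)\pi_0}{1-4\sigma\pi_0}$, $\Phi(C,\sigma,\pi_0)=0.5+2\sigma\pi_0+(0.5+2\sigma\pi_0)\psi(\pi_1(1))+(0.5-2\sigma\pi_0)\psi(\pi_1(0))$ and $\Phi(S,\sigma,\pi_0)=0.5+\psi(\pi_0)$; the expert chooses the complex rule iff $\Phi(C,\sigma,\pi_0)\ge\Phi(S,\sigma,\pi_0)$ and the simple rule otherwise. Let $$\pi^\dagger=\frac{w}{4\sigma(1+w)},\qquad \overline\pi=\frac{\pi^*}{1-4\sigma(1-\pi^* )}.$$ If $\pi^\dagger\le\pi^*$ then the expert chooses the complex rule. If $\pi^\dagger>\pi^*$ then he chooses the simple rule if and only if $\pi^*\le\pi_0<\min\{\pi^\dagger,\overline\pi\}$.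
   Context: Interpretation: the expert earns wage $w$ iff the posterior belief that he is competent is at least $\pi^*$; the complex rule yields the correct action with probability $0.5+2\sigma$ if he is competent and $0.5$ otherwise (posterior $\pi_1(Y)$ after correct $Y=1$ or incorrect $Y=0$ action), and the simple rule yields it with probability $0.5$ and leaves the posterior at the prior $\pi_0$. *)

(* Defs.v *)
From Stdlib Require Import Reals.
Open Scope R_scope.

Definition psi (pistar w p : R) : R := if Rle_dec pistar p then w else 0.

(* Posteriors after a correct (Y=1) / incorrect (Y=0) action under the complex rule. *)
Definition pi1_1 (sigma pi0 : R) : R := (1 + 4 * sigma) * pi0 / (1 + 4 * sigma * pi0).
Definition pi1_0 (sigma pi0 : R) : R := (1 - 4 * sigma) * pi0 / (1 - 4 * sigma * pi0).

Definition PhiC (pistar w sigma pi0 : R) : R :=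
  (1/2) + 2 * sigma * pi0
  + ((1/2) + 2 * sigma * pi0) * psi pistar w (pi1_1 sigma pi0)
  + ((1/2) - 2 * sigma * pi0) * psi pistar w (pi1_0 sigma pi0).
Definition PhiS (pistar w pi0 : R) : R := (1/2) + psi pistar w pi0.

Definition chooses_complex (pistar w sigma pi0 : R) : Prop :=
  PhiS pistar w pi0 <= PhiC pistar w sigma pi0.
Definition chooses_simple (pistar w sigma pi0 : R) : Prop :=
  PhiC pistar w sigma pi0 < PhiS pistar w pi0.

Definition pi_dagger (w sigma : R) : R := w / (4 * sigma * (1 + w)).
Definition pi_bar (pistar sigma : R) : R := pistar / (1 - 4 * sigma * (1 - pistar)).

(* Main.v *)
Require Import Defs.
From Stdlib Require Import Reals Lra Psatz.
Open Scope R_scope.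

Lemma div_le_iff (x y d : R) : 0 < d -> (x <= y / d <-> x * d <= y).
Proof.
  intros Hd. assert (E : y / d * d = y) by (field; lra).
  split; intro H.
  - rewrite <- E. apply Rmult_le_compat_r; lra.
  - apply Rnot_lt_le; intro H'. apply (Rmult_lt_compat_r d) in H'; lra.
Qed.

Lemma le_div_iff (x y d : R) : 0 < d -> (y / d <= x <-> y <= x * d).
Proof.
  intros Hd. assert (E : y / d * d = y) by (field; lra).
  split; intro H.
  - rewrite <- E. apply Rmult_le_compat_r; lra.
  - apply Rnot_lt_le; intro H'. apply (Rmult_lt_compat_r d) in H'; lra.
Qed.

Theorem proposition5 (sigma pi0 w pistar : R)
  (Hsigma : 0 < sigma <= 1 / 4) (Hpi0 : 0 < pi0 < 1) (Hw : 0 < w)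
  (Hpistar : 0 < pistar < 1) :
  (pi_dagger w sigma <= pistar -> chooses_complex pistar w sigma pi0) /\
  (pistar < pi_dagger w sigma ->
     (chooses_simple pistar w sigma pi0 <->
      pistar <= pi0 /\ pi0 < Rmin (pi_dagger w sigma) (pi_bar pistar sigma))).
Proof.
  assert (Hd1 : 0 < 1 + 4 * sigma * pi0) by nra.
  assert (Hd0 : 0 < 1 - 4 * sigma * pi0) by nra.
  assert (Hdb : 0 < 1 - 4 * sigma * (1 - pistar)) by nra.
  assert (Hdd : 0 < 4 * sigma * (1 + w)) by nra.
  assert (F1 : pi0 <= pi1_1 sigma pi0).
  { unfold pi1_1. apply (proj2 (div_le_iff _ _ _ Hd1)). assert (0 <= sigma * (pi0 * (1 - pi0))) by (apply Rmult_le_pos; nra). nra. }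
  assert (F2 : pistar <= pi1_0 sigma pi0 <-> pi_bar pistar sigma <= pi0).
  { unfold pi1_0, pi_bar. rewrite div_le_iff by lra. rewrite le_div_iff by lra. split; intro; nra. }
  assert (F3 : pi_dagger w sigma <= pi0 <-> w <= pi0 * (4 * sigma * (1 + w))).
  { unfold pi_dagger. apply le_div_iff; lra. }
  unfold chooses_complex, chooses_simple, PhiC, PhiS, psi.
  destruct (Rle_dec pistar (pi1_1 sigma pi0)) as [A|A];
  destruct (Rle_dec pistar (pi1_0 sigma pi0)) as [B|B];
  destruct (Rle_dec pistar pi0) as [C|C];
  unfold Rmin; destruct (Rle_dec (pi_dagger w sigma) (pi_bar pistar sigma)) as [D|D];
  try (exfalso; lra);
  split; intros; try split; intros; try lra;
  try (destruct F2 as [F2a F2b]; destruct F3 as [F3a F3b]);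
  nra.
Qed.
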